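(* Let $\mathbb{H}$ be an $r$-uniform simple hypergraph of diameter two with maximum degree $\Delta$. Then $\lambda(\mathbb{H})\le\big((r-1)\Delta\big)^2$.
   Context: Distances in a hypergraph $\mathbb{H}=(V,E)$ are taken in its $2$-section, the graph on $V$ in which distinct vertices are adjacent iff they lie in a common edge; the diameter is the maximum distance between two vertices. The degree of a vertex is the number of edges containing it. An $L(2,1)$-colouring of $\mathbb{H}$ is a map $f:V\to\mathbb{Z}_{\ge 0}$ such that $|f(u)-f(v)|\ge 2$ whenever $u\ne v$ lie in a common edge, and $|f(u)-f(v)|\ge 1$ whenever there are edges $e_1\ni v$, $e_2\ni u$ with $(e_1\cap e_2)\setminus\{u,v\}\ne\emptyset$. Its span is $\max f-\min f$, and $\lambda(\mathbb{H})$ is the minimum span. *)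

(* Defs.v *)
(* A hypergraph is a finite vertex type V with an edge set
   E : {set {set V}} (a set of edges, so no repeated edges: simple). *)
From mathcomp Require Import all_boot.
Set Implicit Arguments. Unset Strict Implicit. Unset Printing Implicit Defensive.

Section Hyper.
Variables (V : finType) (E : {set {set V}}).

Definition uniform (r : nat) : Prop := forall e, e \in E -> #|e| = r.

Definition adj : rel V := fun u v => (u != v) && [exists e in E, (u \in e) && (v \in e)].

Definition dist_le (k : nat) (u v : V) : Prop :=
  exists p : seq V, [/\ size p <= k, path adj u p & last u p = v].

Definition diameter_eq (d : nat) : Prop :=
  (forall u v, dist_le d u v) /\
  (exists u v, dist_le d u v /\ ~ dist_le d.-1 u v /\ 0 < d).

Definition degree (v : V) : nat := #|[set e in E | v \in e]|.
Definition max_degree : nat := \max_(v : V) degree v.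

Definition L21_colouring (f : V -> nat) : Prop :=
  (forall u v e, e \in E -> u \in e -> v \in e -> u != v ->
     (f u + 2 <= f v) || (f v + 2 <= f u)) /\
  (forall u v e1 e2, e1 \in E -> e2 \in E -> v \in e1 -> u \in e2 ->
     u != v -> (exists w, [/\ w \in e1, w \in e2, w != u & w != v]) ->
     f u != f v).

Definition fmax (f : V -> nat) : nat := \max_(v : V) f v.
Definition fmin (f : V -> nat) : nat := \big[minn/fmax f]_(v : V) f v.
Definition span (f : V -> nat) : nat := fmax f - fmin f.

Definition lambda_le (b : nat) : Prop :=
  exists f : V -> nat, L21_colouring f /\ span f <= b.
End Hyper.

(* Main.v *)
Require Import Defs.
From mathcomp Require Import all_boot zify.
Set Implicit Arguments. Unset Strict Implicit. Unset Printing Implicit Defensive.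

Section Build.
Variables (V : finType) (g : rel V) (D : nat).
Hypothesis gsym : symmetric g.
Hypothesis girr : irreflexive g.
Hypothesis gdeg : forall v, #|[set u | g v u]| <= D.

Definition Hc u v := (u != v) && ~~ g u v.

Fixpoint badf (x : V) (s : seq V) : nat := if s is y :: t then g x y + badf y t else 0.
Definition bad s := if s is x :: t then badf x t else 0.
Fixpoint lbf (x : V) (s : seq V) : bool :=
  if s is y :: t then (if t is [::] then g x y else lbf y t) else false.
Definition lb s := if s is x :: t then lbf x t else false.

Lemma badf_cat x s t : badf x (s ++ t) = badf x s + badf (last x s) t.
Proof. by elim: s x => [|y s IH] x //=; rewrite IH addnA. Qed.

Lemma bad_rcons x s z : bad (rcons (x :: s) z) = bad (x :: s) + g (last x s) z.
Proof. by rewrite /= -cats1 badf_cat /= addn0. Qed.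

Lemma bad_rev s : bad (rev s) = bad s.
Proof.
elim: s => [|x s IH] //; case: s IH => [|y s] IH //.
have E : rev (y :: s) = last y s :: rev (belast y s).
  by rewrite lastI rev_rcons.
rewrite rev_cons E bad_rcons -E IH.
have -> : last (last y s) (rev (belast y s)) = y.
  by have := congr1 (last y) E; rewrite rev_cons last_rcons /= => <-.
by rewrite /= gsym addnC.
Qed.

Lemma lbf_rcons x s z : lbf x (rcons s z) = g (last x s) z.
Proof.
elim: s x => [|y s IH] x //=; case: s IH => [|w s] IH //=.
exact: IH.
Qed.

Lemma lb_nth y t : lb (y :: t) = (0 < size t) && g (nth y (y :: t) (size t).-1) (last y t).
Proof.
case/lastP: t => [|t z] //=; rewrite lbf_rcons size_rcons /= last_rcons.
rewrite -rcons_cons nth_rcons /= ltnSn.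
by have := nth_last y (y :: t) => /= ->.
Qed.

Lemma bad_catc A a C : bad (A ++ a :: C) = bad (rcons A a) + badf a C.
Proof.
case: A => [|w A] //=; rewrite -cats1 !badf_cat /= addn0 addnA.
by [].
Qed.

Lemma bad_rcons2 s a u z : bad (rcons (s ++ a :: u) z) = bad (s ++ a :: u) + g (last a u) z.
Proof.
case: s => [|w s]; first exact: bad_rcons.
by rewrite cat_cons bad_rcons last_cat.
Qed.

Lemma bad_rr A a z : bad (rcons (rcons A a) z) = bad (rcons A a) + g a z.
Proof. by rewrite -[rcons A a]cats1 bad_rcons2. Qed.

Lemma lb_rcons2 s a u z : lb (rcons (s ++ a :: u) z) = g (last a u) z.
Proof.
case: s => [|w s] /=; first by rewrite lbf_rcons.
by rewrite lbf_rcons last_cat.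
Qed.


Lemma last_in (y : V) t : t != [::] -> last y t \in t.
Proof. by case: t => // z w _; rewrite /= mem_last. Qed.

Lemma HcC u v : Hc u v = Hc v u.
Proof. by rewrite /Hc eq_sym gsym. Qed.

Lemma build (h : nat -> bool -> nat)
  (Hm : forall m (b b' : bool), b' <= b -> h m b' <= h m.+1 b)
  (Hs : forall m (b : bool), m.+1 <= D -> #|V| + b <= 2 * D -> 1 + h m true <= h m.+1 b) :
  forall m (P : seq V), P != [::] -> uniq P -> size P + m = #|V| ->
  exists s, [/\ uniq s, size s = #|V| & bad s <= bad P + h m (lb P)].
Proof.
elim=> [|m IH] P.
  by move=> _ Pu sz; exists P; split => //; [rewrite -sz addn0 | apply: leq_addr].
case: P => [//|y t] _ Pu sz.
set PP := y :: t; set x := last y t.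
have xP : x \in PP by rewrite /x mem_last.
case: (boolP [exists r, (r \notin PP) && Hc x r]) => [/existsP[r /andP[rP Hr]] | nA].
  have [s [su ss sb]] : exists s, [/\ uniq s, size s = #|V| & bad s <= bad (rcons PP r) + h m (lb (rcons PP r))].
    apply: IH.
    - by rewrite -size_eq0 size_rcons.
    - by rewrite rcons_uniq rP Pu.
    - by rewrite size_rcons addSnnS.
  exists s; split => //; apply: leq_trans sb _.
  rewrite bad_rcons /lb /= lbf_rcons -/x.
  move/andP: Hr => [_ /negbTE ->]; rewrite addn0 leq_add2l; exact: Hm.
case: (boolP [exists r, (r \notin PP) && Hc y r]) => [/existsP[r /andP[rP Hr]] | nB].
  have [s [su ss sb]] : exists s, [/\ uniq s, size s = #|V| & bad s <= bad (r :: PP) + h m (lb (r :: PP))].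
    apply: IH.
    - by [].
    - by rewrite cons_uniq rP Pu.
    - by rewrite /= addSnnS.
  exists s; split => //; apply: leq_trans sb _.
  move/andP: Hr => [_]; rewrite gsym => /negbTE Hr.
  rewrite [bad (r :: PP)]/= Hr add0n leq_add2l; apply: Hm.
  by rewrite /PP; case: (t) => [|z w] /=; [rewrite Hr | ].
case: (boolP [exists i : 'I_(size PP), exists r, [&& (val i).+1 < size PP, Hc (nth y PP i) x, r \notin PP & Hc (nth y PP (val i).+1) r]])
   => [/existsP[i /existsP[r /and4P[ilt Hax rP Hbr]]] | nC].
  set a := nth y PP i; set b := nth y PP (val i).+1.
  have dec : PP = take i PP ++ a :: b :: drop (val i).+2 PP.
    by rewrite -[PP in LHS](cat_take_drop i) (drop_nth y (ltnW ilt)) (drop_nth y ilt).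
  move: dec; set A := take i PP; set B := drop (val i).+2 PP => dec.
  have xB : last b B = x by have := congr1 (last y) dec; rewrite last_cat.
  have E : rev (b :: B) = last b B :: rev (belast b B) by rewrite lastI rev_rcons.
  set Q := A ++ a :: rev (b :: B).
  have pQ : perm_eq Q PP by rewrite [X in perm_eq _ X]dec perm_cat2l perm_cons perm_rev.
  have lQ : last a (rev (b :: B)) = b by rewrite rev_cons last_rcons.
  move/andP: Hbr => [_ /negbTE gbr].
  have [s [su ss sb]] : exists s, [/\ uniq s, size s = #|V| & bad s <= bad (rcons Q r) + h m (lb (rcons Q r))].
    apply: IH.
    - by rewrite -size_eq0 size_rcons.
    - by rewrite rcons_uniq (perm_mem pQ) rP (perm_uniq pQ).
    - by rewrite size_rcons (perm_size pQ) addSnnS.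
  exists s; split => //; apply: leq_trans sb _.
  rewrite /Q lb_rcons2 bad_rcons2 lQ gbr addn0 -/Q.
  apply: leq_add; last exact: Hm.
  have badE : badf a (rev (b :: B)) = g a x + bad (b :: B).
    by rewrite -bad_rev E /= xB.
  rewrite /Q bad_catc [X in _ <= bad X]dec bad_catc leq_add2l badE.
  move/andP: Hax => [_]; rewrite gsym => /negbTE ->.
  by rewrite add0n /= leq_addl.
move/existsPn: nA => nA; move/existsPn: nB => nB; move/existsPn: nC => nC.
have gxr r : r \notin PP -> g x r.
  move=> rP; have := nA r; rewrite rP /Hc /=.
  by case: eqP => [xr|_]; [rewrite -xr xP in rP | rewrite negbK].
have gyr r : r \notin PP -> g y r.
  move=> rP; have := nB r; rewrite rP /Hc /=.
  by case: eqP => [yr|_]; [rewrite -yr mem_head in rP | rewrite negbK].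
have cR : #|[set r | r \notin PP]| = m.+1.
  have e : ~: [set r in PP] = [set r | r \notin PP] by apply/setP=> z; rewrite !inE.
  have := cardsC [set r in PP]; rewrite e cardsE (card_uniqP Pu) -sz; lia.
have [r0 r0P] : exists r0, r0 \in [set r | r \notin PP] by apply/card_gt0P; rewrite cR.
rewrite inE in r0P.
have mD : m.+1 <= D.
  rewrite -cR; apply: leq_trans (gdeg x); apply: subset_leq_card.
  by apply/subsetP=> z; rewrite !inE => /gxr.
set degH := #|[set u | Hc x u]|; set degG := #|[set u | g x u]|.
have dHG : degH + degG = #|V|.-1.
  have := cardsID [set u | g x u] [set~ x]; rewrite cardsC1 => <-.
  rewrite addnC; congr (_ + _); apply: eq_card => z; rewrite !inE /Hc.
    by case: eqP => [->|]; rewrite ?girr //= andbT.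
  by rewrite eq_sym andbC.
have sPP : size PP = (size t).+1 by [].
have ix : index x PP = size t.
  by rewrite /x -[last y t]/(last y PP) -(nth_last y) sPP index_uniq // sPP.
set Tidx := [set i : 'I_(size PP) | ((val i).+1 < size PP) && Hc (nth y PP i) x].
have dT : degH <= #|Tidx|.
  apply: leq_trans (leq_imset_card (fun i : 'I_(size PP) => nth y PP i) Tidx).
  apply: subset_leq_card; apply/subsetP => u; rewrite inE => Hu.
  have uP : u \in PP by apply: contraT => /gxr; move/andP: Hu => [_ /negbTE ->].
  have iu : index u PP < size PP by rewrite index_mem.
  apply/imsetP; exists (Ordinal iu); last by rewrite /= nth_index.
  rewrite inE; apply/andP; split; last by rewrite /= nth_index // HcC.
  change ((index u PP).+1 < size PP).
  have : index u PP != index x PP.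
    apply: contraTneq Hu => e; have := congr1 (nth y PP) e; rewrite !nth_index // => ->.
    by rewrite /Hc eqxx.
  rewrite ix; move: iu; rewrite sPP; lia.
set S := [set nth y PP (val i).+1 | i in Tidx].
have cS : #|S| = #|Tidx|.
  apply: card_in_imset => i1 i2; rewrite !inE => /andP[l1 _] /andP[l2 _] e.
  by apply: val_inj; have := congr1 (index ^~ PP) e; rewrite (index_uniq y l1 Pu) (index_uniq y l2 Pu); case.
have Sfact i : i \in Tidx -> g (nth y PP (val i).+1) r0.
  rewrite inE => /andP[il Hi]; have := nC i; rewrite negb_exists => /forallP/(_ r0).
  rewrite il Hi r0P /= /Hc.
  case: eqP => [e|_]; last by rewrite negbK.
  by rewrite -e (mem_nth y il) in r0P.
set W := y |: (x |: S).
have WD : #|W| <= D.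
  apply: leq_trans (gdeg r0); apply: subset_leq_card; apply/subsetP => z.
  rewrite !inE gsym => /orP[/eqP->|/orP[/eqP->|]]; [exact: gyr|exact: gxr|].
  by case/imsetP => i iT ->; exact: Sfact.
have Wlow : 1 + degH + lb PP <= #|W|.
  have [t0|tn] := eqVneq t [::].
    have T0 : #|Tidx| = 0.
      apply/eqP; rewrite cards_eq0; apply/eqP/setP => i; rewrite !inE.
      by apply/negbTE; apply/negP => /andP[il _]; move: (val i) il => k; rewrite sPP t0.
    have -> : lb PP = false by rewrite /lb /PP t0.
    rewrite addn0; move: dT; rewrite T0 leqn0 => /eqP ->.
    by apply/card_gt0P; exists y; rewrite !inE eqxx.
  have yS : y \notin S.
    apply/imsetP => -[i]; rewrite inE => /andP[il _] e.
    by have := congr1 (index ^~ PP) e; rewrite (index_uniq y il Pu) /= eqxx.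
  have yx : y != x.
    apply: contraTneq (last_in y tn) => e; rewrite -/x -e.
    by move: Pu => /= /andP[].
  have xS : lb PP -> x \notin S.
    rewrite lb_nth => /andP[_ gl]; apply/imsetP => -[i]; rewrite inE => /andP[il Hi] e.
    have := congr1 (index ^~ PP) e; rewrite (index_uniq y il Pu) ix => ei.
    move: Hi; rewrite /Hc.
    have -> : val i = (size t).-1 by move: ei; case: (t) => //= *; lia.
    by rewrite gl andbF.
  case: (lb PP) xS => [/(_ isT) xS|_];
    rewrite /W cardsU1 !inE negb_or yx yS /= cardsU1 cS ?xS /=.
    by rewrite -addnA leq_add2l addnC leq_add2l.
  by rewrite addn0 leq_add2l (leq_trans dT) ?leq_addl.
have [s [su ss sb]] : exists s, [/\ uniq s, size s = #|V| & bad s <= bad (rcons PP r0) + h m (lb (rcons PP r0))].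
  apply: IH.
  - by rewrite -size_eq0 size_rcons.
  - by rewrite rcons_uniq r0P Pu.
  - by rewrite size_rcons addSnnS.
exists s; split => //; apply: leq_trans sb _.
rewrite bad_rcons /lb /= lbf_rcons -/x (gxr _ r0P) -addnA leq_add2l.
apply: Hs => //.
have := gdeg x; rewrite -/degG => gD.
have V1 : 0 < #|V| by apply/card_gt0P; exists y.
change (#|V| + lb PP <= 2 * D); move: Wlow WD dHG gD V1; lia.
Qed.

End Build.

Lemma card_bigcup_le (T I : finType) (P : pred I) (F : I -> {set T}) :
  #|\bigcup_(i | P i) F i| <= \sum_(i | P i) #|F i|.
Proof.
apply: (big_ind2 (fun (A : {set T}) (n : nat) => #|A| <= n)).
- by rewrite cards0.
- move=> A1 n1 A2 n2 h1 h2; apply: leq_trans (leq_card_setU _ _) _; exact: leq_add.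
- by [].
Qed.

Section Col.
Variables (V : finType) (E : {set {set V}}).

Lemma adj_sym : symmetric (adj E).
Proof.
move=> u v; rewrite /adj eq_sym; congr (_ && _).
by apply/existsP/existsP => -[e /andP[eE /andP[a b]]]; exists e; rewrite eE a b.
Qed.

Lemma adj_irr : irreflexive (adj E).
Proof. by move=> u; rewrite /adj eqxx. Qed.

Variable (s : seq V) (x0 : V).
Hypothesis su : uniq s.
Hypothesis ss : size s = #|V|.

Definition gi i := i + bad (adj E) (take i.+1 s).
Definition fcol v := gi (index v s).

Lemma mem_s v : v \in s.
Proof.
have := cardC (mem s); rewrite (card_uniqP su) ss -[X in _ = X]addn0 => /addnI /card0_eq /(_ v).
by rewrite !inE => /negbFE.
Qed.

Lemma gi_step i : i.+1 < size s ->
  gi i.+1 = gi i + 1 + adj E (nth x0 s i) (nth x0 s i.+1).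
Proof.
move=> il; rewrite /gi (take_nth x0 il) (take_nth x0 (ltnW il)).
rewrite bad_rr; lia.
Qed.

Lemma gi_mono i k : i + k < size s -> gi i + k <= gi (i + k).
Proof.
elim: k => [|k IH] ik; first by rewrite !addn0.
rewrite !addnS gi_step; last by rewrite -addnS.
have ik' : i + k < size s by move: ik; lia.
have := IH ik'; lia.
Qed.

Lemma gi_lt i j : i < j -> j < size s -> gi i < gi j.
Proof.
move=> ij js; have := gi_mono (k := j - i) (i := i); rewrite subnKC ?(ltnW ij) //.
move=> /(_ js); lia.
Qed.

Lemma fcol_L21 : L21_colouring E fcol.
Proof.
split.
  move=> u v e eE ue ve uv.
  have A : adj E u v by rewrite /adj uv /=; apply/existsP; exists e; rewrite eE ue ve.
  have key : forall a b, adj E a b -> index a s < index b s -> fcol a + 2 <= fcol b.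
    move=> a b ab lt; rewrite /fcol.
    have bs : index b s < size s by rewrite index_mem mem_s.
    case: (ltnP (index a s).+1 (index b s)) => h.
      have h1 := gi_lt h bs; have h2 := gi_lt (ltnSn (index a s)) (ltn_trans h bs); lia.
    have eb : index b s = (index a s).+1 by lia.
    rewrite eb gi_step; last by rewrite -eb.
    rewrite nth_index ?mem_s // -eb nth_index ?mem_s // ab /=; lia.
  have ne : index u s != index v s.
    apply: contraNneq uv => e1; have := congr1 (nth x0 s) e1; rewrite !nth_index ?mem_s //.
    by move=> ->.
  case: (ltngtP (index u s) (index v s)) ne => // h _.
    by rewrite key.
  by apply/orP; right; apply: key; rewrite // adj_sym.
move=> u v e1 e2 _ _ _ _ uv _.
have ne : index u s != index v s.
  apply: contraNneq uv => e; have := congr1 (nth x0 s) e; rewrite !nth_index ?mem_s //.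
  by move=> ->.
rewrite /fcol; case: (ltngtP (index u s) (index v s)) ne => // h _.
  by rewrite neq_ltn (gi_lt h) ?orbT ?index_mem ?mem_s.
by rewrite neq_ltn (gi_lt h) ?orbT ?index_mem ?mem_s.
Qed.

Lemma fcol_span : span fcol <= #|V|.-1 + bad (adj E) s.
Proof.
apply: leq_trans (leq_subr _ _) _; rewrite /fmax.
apply/bigmax_leqP => v _; rewrite /fcol.
have vs : index v s < size s by rewrite index_mem mem_s.
have e : (size s).-1.+1 = size s by rewrite prednK // (leq_ltn_trans _ vs).
have : gi (index v s) <= gi (size s).-1.
  case: (ltngtP (index v s) (size s).-1) => h.
  - by apply: ltnW; apply: gi_lt; rewrite ?e ?ltnSn.
  - by move: vs; rewrite -e ltnS leqNgt h.
  - by rewrite h.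
by rewrite /gi e take_size ss.
Qed.

End Col.


Lemma deg_bound (V : finType) (E : {set {set V}}) r : uniform E r ->
  forall v, #|[set u | adj E v u]| <= (r - 1) * max_degree E.
Proof.
move=> U v.
apply: (@leq_trans #|\bigcup_(e in [set e in E | v \in e]) (e :\ v)|).
  apply: subset_leq_card; apply/subsetP => u.
  rewrite inE /adj => /andP[vu /existsP[e /andP[eE /andP[ve ue]]]].
  by apply/bigcupP; exists e; rewrite !inE ?eE ?ve // ue eq_sym vu.
apply: leq_trans (card_bigcup_le _ _) _.
rewrite (eq_bigr (fun _ => r - 1)); last first.
  move=> e; rewrite inE => /andP[eE ve]; have := cardsD1 v e; rewrite ve U //; lia.
rewrite sum_nat_const mulnC leq_mul2l; apply/orP; right.
exact: (@leq_bigmax _ (fun w => degree E w) v).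
Qed.

Lemma moore (V : finType) (E : {set {set V}}) D :
  (forall v, #|[set u | adj E v u]| <= D) -> (forall u v, dist_le E 2 u v) ->
  forall v0 : V, #|V| <= D * D + 1.
Proof.
move=> deg diam v0.
pose N w := [set u | adj E w u].
have sub : [set: V] \subset v0 |: \bigcup_(w in N v0) (w |: (N w :\ v0)).
  apply/subsetP => u _; have [p [sp pp lp]] := diam v0 u.
  move: sp pp lp; case: p => [|w [|u' [|? ?]]] //= sp.
  - by move=> _ <-; rewrite setU11.
  - rewrite andbT => a <-; apply/setU1P; right; apply/bigcupP; exists w.
      by rewrite inE.
    by rewrite setU11.
  - move=> /andP[a /andP[b _]] <-; case: (eqVneq u' v0) => [->|ne]; first by rewrite setU11.
    apply/setU1P; right; apply/bigcupP; exists w; first by rewrite inE.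
    by rewrite !inE ne b orbT.
have := subset_leq_card sub; rewrite cardsT => h; apply: leq_trans h _.
rewrite cardsU1 addnC leq_add ?leq_b1 //.
apply: leq_trans (card_bigcup_le _ _) _.
apply: (@leq_trans (\sum_(w in N v0) D)).
  apply: leq_sum => w; rewrite inE => a.
  rewrite cardsU1; have := cardsD1 v0 (N w); rewrite inE adj_sym a.
  have := deg w; rewrite -/(N w); case: (w \notin _) => /=; lia.
by rewrite sum_nat_const leq_mul2r deg orbT.
Qed.

Lemma deg2 (V : finType) (E : {set {set V}}) D :
  (forall v, #|[set u | adj E v u]| <= D) -> diameter_eq E 2 -> 2 <= D.
Proof.
move=> deg [_ [u [v [[p [sp pp lp]] [nd _]]]]].
move: sp pp lp; case: p => [|w [|v' [|? ?]]] //= sp.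
- by move=> _ e; case: nd; exists [::]; split.
- by move=> pp e; case: nd; exists [:: w]; split => //.
move=> /andP[a /andP[b _]] e; subst v'.
have uv : u != v by apply/eqP => e; apply: nd; rewrite e; exists [::]; split.
apply: leq_trans (deg w); have := cards2 u v; rewrite uv => <-; apply: subset_leq_card.
by apply/subsetP => z; rewrite !inE => /orP[] /eqP ->; rewrite // adj_sym.
Qed.

Theorem mainTheorem9 (V : finType) (E : {set {set V}}) (r : nat) :
  uniform E r -> diameter_eq E 2 ->
  lambda_le E (((r - 1) * max_degree E) ^ 2).
Proof.
move=> U dm; have degB := deg_bound U.
have D2 := deg2 degB dm.
move: dm => [diam [u0 _]].
have nM := moore degB diam u0.
have n1 : 0 < #|V| by apply/card_gt0P; exists u0.
set D := (r - 1) * max_degree E in degB D2 nM *.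
have fin : forall h : nat -> bool -> nat,
   (forall (m : nat) (b b' : bool), b' <= b -> h m b' <= h m.+1 b) ->
   (forall (m : nat) (b : bool), m < D -> #|V| + b <= 2 * D -> 1 + h m true <= h m.+1 b) ->
   #|V|.-1 + h #|V|.-1 false <= D ^ 2 -> lambda_le E (D ^ 2).
  move=> h Hm Hs fb.
  have [s [su ss sb]] := build (@adj_sym V E) (@adj_irr V E) degB Hm Hs (m := #|V|.-1) (P := [:: u0]) isT isT (ltac:(rewrite /= add1n prednK //)).
  exists (fcol E s); split; first exact: fcol_L21 u0 su ss.
  apply: leq_trans (fcol_span E u0 su ss) _; apply: leq_trans fb.
  by rewrite leq_add2l; apply: leq_trans sb _.
have DD : D ^ 2 = D * D by rewrite mulnn.
case: (ltnP (2 * D) #|V|) => [big|small].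
  apply: (fin (fun _ _ => 0)) => //.
    by move=> m b _ Hb; move: big Hb; case: b => /=; lia.
  by rewrite DD; lia.
case: (boolP ((3 <= D) || (#|V| <= 3))) => [c|c].
  apply: (fin (fun m _ => minn m D)).
  - by move=> m b b' _; lia.
  - by move=> m b mD _; lia.
  rewrite DD; case/orP: c => c.
    have : 3 * D <= D * D by rewrite leq_mul2r c orbT.
    lia.
  have : 2 * D <= D * D by rewrite leq_mul2r D2 orbT.
  lia.
have D2' : D = 2 by move: c; rewrite negb_or -!ltnNge; lia.
have n4 : #|V| = 4 by move: c small; rewrite negb_or -!ltnNge D2'; lia.
apply: (fin (fun m b => if b then (1 < m : nat) else (0 < m : nat))).
- by move=> m [] [] //= _; lia.
- by move=> m b; rewrite n4 D2'; case: b => //= mD _; lia.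
by rewrite n4 DD D2'.
Qed.
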